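(* Let $d\in\mathcal{S}G$. The $2$-quasi-abelian code $\mathfrak{C}_{1,d}$ over $\mathcal{S}$ is Hermitian LCD if and only if $\pi(\mathfrak{C}_{1,d})=\mathcal{C}_{1,\pi(d)}$ is a Hermitian LCD $2$-quasi-abelian code over $\mathbb{F}$.
   Context: Let $\mathcal{S}|\mathcal{R}$ be a Galois extension of degree $2$ of finite commutative chain rings, $\mathbf{m}$ the maximal ideal of $\mathcal{S}$, with residue fields $\mathcal{S}/\mathbf{m}=\mathbb{F}=\mathbb{F}_{q^2}$ and $\mathbb{F}_q$ for $\mathcal{R}$; let $\sigma$ generate $\mathrm{Aut}_{\mathcal{R}}(\mathcal{S})$ (order 2). Let $G$ be a finite abelian group of odd order $n$ with $\gcd(n,q)=1$. The Hermitian form on $(\mathcal{S}G)^2$ is $\langle(a_1,b_1),(a_2,b_2)\rangle_H=\sum_g a_{1,g}\sigma(a_{2,g})+\sum_g b_{1,g}\sigma(b_{2,g})$; on $(\mathbb{F}G)^2$ the Hermitian form is $\sum_g a_{1,g}a_{2,g}^q+\sum_g b_{1,g}b_{2,g}^q$. A $2$-quasi-abelian code over $\mathcal{S}$ (resp. $\mathbb{F}$) is an $\mathcal{S}G$- (resp. $\mathbb{F}G$-)submodule of $(\mathcal{S}G)^2$ (resp. $(\mathbb{F}G)^2$); it is Hermitian LCD if it meets its Hermitian dual only in $0$. $\mathfrak{C}_{c,d}=\{(uc,ud):u\in\mathcal{S}G\}$ and $\mathcal{C}_{a,b}=\{(sa,sb):s\in\mathbb{F}G\}$. The map $\pi:\mathcal{S}G\to\mathbb{F}G$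 reduces coefficients modulo $\mathbf{m}$, applied componentwise on $(\mathcal{S}G)^2$. *)

(* Defs.v *)
From HB Require Import structures.
From mathcomp Require Import all_boot all_order all_algebra all_fingroup.
Set Implicit Arguments. Unset Strict Implicit. Unset Printing Implicit Defensive.
Import GRing.Theory.
Local Open Scope ring_scope.

Definition is_ideal (R : comNzRingType) (I : pred R) : Prop :=
  [/\ 0 \in I, (forall a b, a \in I -> b \in I -> a + b \in I)
    & (forall r a, a \in I -> r * a \in I)].

Definition chain_ring (R : comNzRingType) : Prop :=
  forall I J : pred R, is_ideal I -> is_ideal J ->
    {subset I <= J} \/ {subset J <= I}.

(* S is a Galois extension of degree 2 of its fixed ring R = S^sigma with
   Galois group {id, sigma} (Chase-Harrison-Rosenberg definition). *)
Definition galois_deg2 (S : comNzRingType) (sigma : {rmorphism S -> S}) : Prop :=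
  [/\ (forall a, sigma (sigma a) = a),
      (exists a, sigma a != a)
    & exists m (x y : 'I_m -> S),
        \sum_(i < m) x i * y i = 1 /\ \sum_(i < m) x i * sigma (y i) = 0].

Definition galg (R : comNzRingType) (gT : finGroupType) := {ffun gT -> R}.

Definition gmul (R : comNzRingType) (gT : finGroupType) (u c : galg R gT)
  : galg R gT := [ffun g => \sum_(h : gT) u h * c (h^-1 * g)%g].

Definition gone (R : comNzRingType) (gT : finGroupType) : galg R gT :=
  [ffun g => (g == 1%g)%:R].

Definition gmap (R R' : comNzRingType) (gT : finGroupType) (f : R -> R')
  (u : galg R gT) : galg R' gT := [ffun g => f (u g)].

Definition qa_code (R : comNzRingType) (gT : finGroupType) (c d : galg R gT)
  (x : galg R gT * galg R gT) : Prop :=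
  exists u : galg R gT, x = (gmul u c, gmul u d).

Definition herm (R : comNzRingType) (gT : finGroupType) (inv : R -> R)
  (x y : galg R gT * galg R gT) : R :=
  \sum_(g : gT) x.1 g * inv (y.1 g) + \sum_(g : gT) x.2 g * inv (y.2 g).

Definition herm_LCD (R : comNzRingType) (gT : finGroupType) (inv : R -> R)
  (C : galg R gT * galg R gT -> Prop) : Prop :=
  forall x, C x -> (forall y, C y -> herm inv x y = 0) -> x = (0, 0).

(* Main.v *)
Require Import Defs.
From HB Require Import structures.
From mathcomp Require Import all_boot all_order all_algebra all_fingroup all_field.
From mathcomp Require Import ring.
Import GRing.Theory.
Local Open Scope ring_scope.
Section G1.
Variables (R : comNzRingType) (gT : finGroupType) (inv : R -> R).
Hypotheses (inv0 : inv 0 = 0) (inv1 : inv 1 = 1)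
  (invD : forall a b, inv (a + b) = inv a + inv b)
  (invM : forall a b, inv (a * b) = inv a * inv b).

Lemma inv_sum (I : Type) (r : seq I) (P : pred I) (f : I -> R) :
  inv (\sum_(i <- r | P i) f i) = \sum_(i <- r | P i) inv (f i).
Proof. exact: (big_morph inv invD inv0). Qed.

Lemma gmul1 (u : galg R gT) : gmul u (gone R gT) = u.
Proof.
apply/ffunP => g; rewrite ffunE (bigD1 g) //= big1 ?addr0.
  by rewrite ffunE mulVg eqxx mulr1.
move=> h hg; rewrite ffunE; case: eqP => [e|]; last by rewrite mulr0.
by move: hg; rewrite -(mulKVg h g) e mulg1 eqxx.
Qed.

Definition Mx (d : galg R gT) (k h : gT) : R :=
  (k == h)%:R + \sum_(g : gT) d (k^-1 * g)%g * inv (d (h^-1 * g)%g).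

Lemma herm_expand (d u v : galg R gT) :
  herm inv (u, gmul u d) (v, gmul v d) =
  \sum_(h : gT) inv (v h) * \sum_(k : gT) u k * Mx d k h.
Proof.
rewrite /herm /=.
have -> : \sum_(h : gT) inv (v h) * \sum_(k : gT) u k * Mx d k h =
  \sum_(h : gT) inv (v h) * \sum_(k : gT) u k * (k == h)%:R +
  \sum_(h : gT) inv (v h) * \sum_(k : gT) u k *
     \sum_(g : gT) d (k^-1 * g)%g * inv (d (h^-1 * g)%g).
  rewrite -big_split /=; apply: eq_bigr => h _.
  by rewrite -mulrDr -big_split /=; congr (_ * _); apply: eq_bigr => k _; rewrite mulrDr.
congr (_ + _).
  apply: eq_bigr => g _; rewrite (bigD1 g) //= eqxx big1 ?addr0.
    by rewrite mulr1 mulrC.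
  by move=> k /negbTE ->; rewrite mulr0.
under eq_bigr => g _ do rewrite !ffunE inv_sum mulr_suml.
under eq_bigr => g _ do under eq_bigr => k _ do rewrite mulr_sumr.
under [RHS]eq_bigr => h _ do rewrite mulr_sumr.
under [RHS]eq_bigr => h _ do under eq_bigr => k _ do rewrite mulr_sumr mulr_sumr.
rewrite exchange_big /=.
under eq_bigr => k _ do rewrite exchange_big /=.
rewrite exchange_big /=; apply: eq_bigr => h _; apply: eq_bigr => k _.
apply: eq_bigr => g _; rewrite invM; ring.
Qed.

Lemma LCD_iff (d : galg R gT) :
  herm_LCD inv (qa_code (gone R gT) d) <->
  (forall u : galg R gT, (forall h, \sum_(k : gT) u k * Mx d k h = 0) -> u = 0).
Proof.
split.
  move=> H u Hu.
  have := H (u, gmul u d).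
  have mem : qa_code (gone R gT) d (u, gmul u d) by exists u; rewrite gmul1.
  move=> /(_ mem) X.
  suff : (u, gmul u d) = (0, 0) by case.
  apply: X => y [v ->]; rewrite gmul1 herm_expand.
  by apply: big1 => h _; rewrite Hu mulr0.
move=> H x [u ->] Hx.
have u0 : u = 0.
  apply: H => h.
  pose v : galg R gT := [ffun k => (k == h)%:R].
  have := Hx (v, gmul v d); rewrite !gmul1 herm_expand.
  move=> /(_ (ex_intro _ v (congr1 (fun z => (z, gmul v d)) (esym (gmul1 v))))).
  rewrite (bigD1 h) //= [X in _ + X = _]big1 ?addr0.
    by rewrite /v ffunE eqxx inv1 mul1r.
  by move=> k kh; rewrite /v ffunE (negbTE kh) inv0 mul0r.
have g0 : forall c, gmul 0 c = 0 :> galg R gT.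
  by move=> c; apply/ffunP => g; rewrite !ffunE big1 // => h _; rewrite ffunE mul0r.
by rewrite u0 !g0.
Qed.
End G1.

Lemma row_inj_unit (R : finComUnitRingType) n (A : 'M[R]_n) :
  (forall x : 'rV_n, x *m A = 0 -> x = 0) <-> A \in unitmx.
Proof.
split; last first.
  by move=> uA x xA0; rewrite -(mulmxK uA x) xA0 mul0mx.
move=> H.
have inj : injective (fun x : 'rV[R]_n => x *m A).
  move=> x y /= e; apply/eqP; rewrite -subr_eq0; apply/eqP/H.
  by rewrite mulmxBl e subrr.
have onto : forall y : 'rV[R]_n, exists x, x *m A == y.
  move=> y; have := injF_onto inj y; case/codomP=> x ->; by exists x.
pose B := \matrix_(i < n) (xchoose (onto (delta_mx 0 i))).
have BA : B *m A = 1%:M.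
  apply/row_matrixP => i; rewrite row_mul rowK (eqP (xchooseP (onto _))).
  by rewrite rowE mulmx1.
by case: (mulmx1_unit BA).
Qed.

Definition matN (R : Type) (gT : finGroupType) (N : gT -> gT -> R) : 'M[R]_#|gT| :=
  \matrix_(i, j) N (enum_val i) (enum_val j).
Arguments matN {R gT}.

Lemma fun_inj_unit (R : finComUnitRingType) (gT : finGroupType) (N : gT -> gT -> R) :
  (forall u : galg R gT, (forall h, \sum_(k : gT) u k * N k h = 0) -> u = 0)
  <-> matN N \in unitmx.
Proof.
have sumE : forall (x : 'rV[R]_#|gT|) h,
    \sum_(k : gT) x 0 (enum_rank k) * N k h =
    (x *m matN N) 0 (enum_rank h).
  move=> x h; rewrite mxE (reindex (fun i : 'I_#|gT| => enum_val i)) /=; last first.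
    by exists enum_rank => i _; rewrite ?enum_valK ?enum_rankK.
  by apply: eq_bigr => i _; rewrite enum_valK mxE enum_rankK.
rewrite -row_inj_unit; split.
  move=> H x xA; pose u : galg R gT := [ffun g => x 0 (enum_rank g)].
  have := H u; have hyp : forall h, \sum_k u k * N k h = 0.
    move=> h; under eq_bigr => k _ do rewrite ffunE.
    by rewrite sumE xA mxE.
  move=> /(_ hyp) u0; apply/rowP => i; rewrite mxE.
  by have := congr1 (fun f : galg R gT => f (enum_val i)) u0; rewrite !ffunE enum_valK.
move=> H u Hu; pose x : 'rV[R]_#|gT| := \row_i u (enum_val i).
have : x = 0.
  apply: H; apply/rowP => j; rewrite -(enum_valK j) -sumE mxE.
  rewrite -[RHS](Hu (enum_val j)); apply: eq_bigr => k _; by rewrite mxE enum_rankK.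
move=> x0; apply/ffunP => g; rewrite ffunE.
by have := congr1 (fun y : 'rV[R]_#|gT| => y 0 (enum_rank g)) x0; rewrite !mxE enum_rankK.
Qed.
Section Frob.
Variables (F : finFieldType) (q : nat) (tau : F -> F).
Hypotheses (tauD : forall a b, tau (a + b) = tau a + tau b)
  (tauM : forall a b, tau (a * b) = tau a * tau b) (tau1 : tau 1 = 1)
  (tauK : forall a, tau (tau a) = a) (tau_nt : exists y0, tau y0 != y0)
  (cardF : #|F| = (q ^ 2)%N).

Lemma frobD (x y : F) : (x + y) ^+ q = x ^+ q + y ^+ q.
Proof.
apply: exprDn_pchar.
have [p pr pc] := finPcharP F.
have := card_pprimeChar pc.
move=> cF.
have : [pchar F].-nat #|F|.
  rewrite cF pnatX (pnatE _ pr) pc //.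
by rewrite cardF pnatX orbF.
Qed.

Lemma tau0 : tau 0 = 0.
Proof.
have h := tauD 0 0; rewrite addr0 in h.
by apply: (@addrI _ (tau 0)); rewrite addr0 -h.
Qed.

Lemma tauN x : tau (- x) = - tau x.
Proof. by apply/eqP; rewrite -subr_eq0 opprK -tauD addNr tau0. Qed.

Lemma tauB x y : tau (x - y) = tau x - tau y.
Proof. by rewrite tauD tauN. Qed.

Lemma tau_inj : injective tau.
Proof. by move=> x y e; rewrite -(tauK x) e tauK. Qed.

Lemma tau_eq0 x : (tau x == 0) = (x == 0).
Proof. by rewrite -{1}tau0 (inj_eq tau_inj). Qed.

Lemma tauV x : tau (x^-1) = (tau x)^-1.
Proof.
have [->|x0] := eqVneq x 0; first by rewrite invr0 tau0 invr0.
apply: (@mulfI _ (tau x)); first by rewrite tau_eq0.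
by rewrite -tauM !divff ?tau1 ?tau_eq0.
Qed.

Definition K := [set y : F | tau y == y].

Lemma q_gt0 : (0 < q)%N.
Proof. rewrite lt0n; apply/eqP => q0; move: (finNzRing_gt1 F); by rewrite cardF q0. Qed.

Lemma cardK : #|K| = q.
Proof.
have [y0 ny0] := tau_nt.
have dnz : y0 - tau y0 != 0 by rewrite subr_eq0 eq_sym.
pose f := fun ab : F * F => ab.1 + ab.2 * y0.
have inj : {in setX K K &, injective f}.
  move=> [a b] [a' b']; rewrite !inE /= => /andP [/eqP ta /eqP tb] /andP [/eqP ta' /eqP tb'] e.
  have e2 := congr1 tau e; rewrite !tauD !tauM ta tb ta' tb' in e2.
  have : (b - b') * (y0 - tau y0) =
     (a + b * y0) - (a + b * tau y0) - ((a' + b' * y0) - (a' + b' * tau y0)) by ring.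
  rewrite /f /= in e; rewrite e e2 !subrr => /eqP; rewrite mulf_eq0 (negbTE dnz) orbF.
  rewrite subr_eq0 => /eqP bb; rewrite bb in e; move/addIr: e => ->; by rewrite bb.
have sur : f @: setX K K = [set: F].
  apply/eqP; rewrite eqEsubset subsetT /=; apply/subsetP => y _.
  pose b := (y - tau y) / (y0 - tau y0); pose a := y - b * y0.
  have tb : tau b = b.
    rewrite /b tauM tauV !tauB !tauK -(opprB y) -(opprB y0) invrN mulrNN //.
  have bd : b * (y0 - tau y0) = y - tau y by rewrite /b divfK.
  apply/imsetP; exists (a, b); last by rewrite /f /a /= subrK.
  rewrite !inE /= tb eqxx andbT; apply/eqP.
  rewrite /a tauB tauM tb; apply/eqP; rewrite -subr_eq0; apply/eqP.
  have -> : tau y - b * tau y0 - (y - b * y0) = b * (y0 - tau y0) - (y - tau y) by ring.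
  by rewrite bd subrr.
have := card_in_imset inj; rewrite sur cardsT cardsX cardF mulnn => /eqP.
by rewrite eqn_exp2r // => /eqP.
Qed.

Lemma K_frob z : z \in K -> z ^+ q = z.
Proof.
move=> zK; have [->|z0] := eqVneq z 0; first by rewrite expr0n eqn0Ngt q_gt0.
pose E := K :\ (0 : F).
have KM : forall x y, x \in K -> y \in K -> x * y \in K.
  by move=> x y; rewrite !inE tauM => /eqP -> /eqP ->.
have zE : z \in E by rewrite in_setD1 z0 zK.
have inj : {in E &, injective ( *%R z)} by move=> x y _ _; apply: mulfI.
have imE : [set z * x | x in E] = E.
  apply/eqP; rewrite eqEcard card_in_imset // leqnn andbT.
  apply/subsetP => w /imsetP [x xE ->]; move: xE; rewrite !inE mulf_eq0 negb_or z0 /=.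
  case/andP=> -> /eqP xK; rewrite tauM xK; move: zK; rewrite inE => /eqP ->.
  by rewrite eqxx.
have P0 : \prod_(x in E) x != 0 by apply/prodf_neq0 => x; rewrite !inE => /andP [].
have : \prod_(x in E) x = z ^+ #|E| * \prod_(x in E) x.
  rewrite -{1}imE big_imset //= big_split /= prodr_const //.
have cE : #|E| = q.-1.
  have := cardsD1 (0:F) K; rewrite cardK inE tau0 eqxx add1n => ->.
  by rewrite /E.
rewrite cE -{1}[\prod_(x in E) x]mul1r => /(mulIf P0) h.
by rewrite -(prednK q_gt0) exprS -h mulr1.
Qed.

Lemma q_gt1 : (1 < q)%N.
Proof.
have := finNzRing_gt1 F; rewrite cardF.
by case: q => [|[|n]].
Qed.

Lemma frob_fix y : y ^+ q = y -> tau y = y.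
Proof.
move=> yq.
pose Phi := [set x : F | x ^+ q == x].
have KP : K \subset Phi by apply/subsetP => x xK; rewrite inE K_frob.
have szp : size ('X^q - 'X : {poly F}) = q.+1.
  rewrite size_polyDl ?size_polyXn // size_polyN size_polyX ltnS; exact: q_gt1.
have cP : (#|Phi| <= q)%N.
  rewrite cardE -ltnS -szp; apply: max_poly_roots.
  - by rewrite -size_poly_eq0 szp.
  - apply/allP => x; rewrite mem_enum inE => /eqP xq.
    by rewrite rootE !hornerE xq subrr.
  - exact: enum_uniq.
have : K == Phi by rewrite eqEcard KP cardK.
move/eqP => KP'.
have : y \in Phi by rewrite inE yq.
by rewrite -KP' inE => /eqP.
Qed.

Lemma frobB (x y : F) : (x - y) ^+ q = x ^+ q - y ^+ q.
Proof. by apply/eqP; rewrite eq_sym subr_eq -(frobD (x - y) y) subrK. Qed.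

Lemma tau_frob y : tau y = y ^+ q.
Proof.
pose s := y + tau y; pose n := y * tau y.
have sK : s \in K by rewrite inE /s tauD tauK addrC.
have nK : n \in K by rewrite inE /n tauM tauK mulrC.
pose w := y ^+ q.
have : (w - y) * (w - tau y) = 0.
  have -> : (w - y) * (w - tau y) = w ^+ 2 - s * w + n.
    by rewrite /s /n; ring.
  have e : (y ^+ 2 - s * y + n) ^+ q = w ^+ 2 - s * w + n.
    rewrite frobD frobB exprMn [(s * y) ^+ q]exprMn (K_frob s sK) (K_frob n nK) /w expr2 //.
  rewrite -e.
  have -> : y ^+ 2 - s * y + n = 0 by rewrite /s /n; ring.
  by rewrite expr0n eqn0Ngt (ltnW q_gt1).
move/eqP; rewrite mulf_eq0 !subr_eq0 => /orP [/eqP wy|/eqP wt]; last by [].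
by rewrite frob_fix -/w wy.
Qed.
End Frob.

Lemma herm_LCD_ext (R : comNzRingType) (gT : finGroupType) (f g : R -> R)
  (C : galg R gT * galg R gT -> Prop) :
  (forall a, f a = g a) -> herm_LCD f C <-> herm_LCD g C.
Proof.
move=> E.
have hE : forall x y : galg R gT * galg R gT, herm f x y = herm g x y.
  by move=> x y; rewrite /herm; congr (_ + _); apply: eq_bigr => i _; rewrite E.
split=> H x Cx Hx; apply: H => // y Cy.
  by rewrite hE; apply: Hx.
by rewrite -hE; apply: Hx.
Qed.

Section Tau.
Variables (S : finComUnitRingType) (sigma : {rmorphism S -> S})
  (F : finFieldType) (pi : {rmorphism S -> F}).
Hypotheses (surj : forall y : F, exists a : S, pi a = y)
  (ker : forall a : S, pi a = 0 <-> a \isn't a GRing.unit)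
  (sK : forall a, sigma (sigma a) = a).

Lemma surjb (y : F) : exists a : S, pi a == y.
Proof. by have [a <-] := surj y; exists a. Qed.

Definition tau (y : F) : F := pi (sigma (xchoose (surjb y))).

Lemma tau_pi a : tau (pi a) = pi (sigma a).
Proof.
rewrite /tau; set b := xchoose _.
have pb : pi b = pi a by apply/eqP; exact: (xchooseP (surjb (pi a))).
have : pi (b - a) = 0 by rewrite rmorphB pb subrr.
move/ker => nu.
have : pi (sigma (b - a)) = 0.
  apply/ker; apply: contra nu => u; rewrite -[b - a]sK; exact: rmorph_unit.
by rewrite !rmorphB => /eqP; rewrite subr_eq0 => /eqP.
Qed.

Lemma tauD' a b : tau (a + b) = tau a + tau b.
Proof.
have [x <-] := surj a; have [y <-] := surj b.
by rewrite -rmorphD !tau_pi !rmorphD.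
Qed.

Lemma tauM' a b : tau (a * b) = tau a * tau b.
Proof.
have [x <-] := surj a; have [y <-] := surj b.
by rewrite -rmorphM !tau_pi !rmorphM.
Qed.

Lemma tau1' : tau 1 = 1.
Proof. by rewrite -(rmorph1 pi) tau_pi !rmorph1. Qed.

Lemma tau0' : tau 0 = 0.
Proof. by rewrite -(rmorph0 pi) tau_pi !rmorph0. Qed.

Lemma tauK' a : tau (tau a) = a.
Proof. by have [x <-] := surj a; rewrite !tau_pi sK. Qed.

Lemma tau_nt' : galois_deg2 sigma -> exists y0, tau y0 != y0.
Proof.
case=> _ _ [m [x [y [e1 e2]]]].
apply/existsP; apply: contraT; rewrite negb_exists => /forallP H.
have H' : forall a, pi (sigma a) = pi a.
  by move=> a; rewrite -tau_pi; apply/eqP; move: (H (pi a)); rewrite negbK.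
have := congr1 pi e2; rewrite rmorph_sum rmorph0.
under eq_bigr => i _ do rewrite rmorphM H' -rmorphM.
by rewrite -rmorph_sum e1 rmorph1 => /eqP; rewrite oner_eq0.
Qed.

End Tau.

Lemma gmap_gmul (S : comNzRingType) (F : comNzRingType) (pi : {rmorphism S -> F})
  (gT : finGroupType) (u c : galg S gT) :
  gmap pi (gmul u c) = gmul (gmap pi u) (gmap pi c).
Proof.
apply/ffunP => g; rewrite !ffunE rmorph_sum; apply: eq_bigr => h _.
by rewrite rmorphM !ffunE.
Qed.

Lemma gmap_gone (S : comNzRingType) (F : comNzRingType) (pi : {rmorphism S -> F})
  (gT : finGroupType) : gmap pi (gone S gT) = gone F gT.
Proof. by apply/ffunP => g; rewrite !ffunE rmorph_nat. Qed.

Theorem theorem4p2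
  (S : finComUnitRingType) (sigma : {rmorphism S -> S})
  (F : finFieldType) (pi : {rmorphism S -> F}) (q : nat)
  (gT : finGroupType) (d : galg S gT) :
  chain_ring S ->
  galois_deg2 sigma ->
  (forall y : F, exists a : S, pi a = y) ->
  (forall a : S, pi a = 0 <-> a \isn't a GRing.unit) ->
  #|F| = (q ^ 2)%N ->
  abelian [set: gT] -> odd #|gT| -> coprime #|gT| q ->
  (forall x, (exists y, qa_code (gone S gT) d y /\ x = (gmap pi y.1, gmap pi y.2))
             <-> qa_code (gone F gT) (gmap pi d) x)
  /\
  (herm_LCD sigma (qa_code (gone S gT) d)
   <-> herm_LCD (fun a : F => a ^+ q) (qa_code (gone F gT) (gmap pi d))).
Proof.
move=> _ gal surj ker cardF _ _ _.
have sK : forall a, sigma (sigma a) = a by case: gal.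
split.
  move=> x; split.
    case=> [[y1 y2] [[u [-> ->]] ->]] /=.
    by exists (gmap pi u); rewrite !gmap_gmul gmap_gone.
  case=> [v ->].
  pose u : galg S gT := [ffun g => xchoose (surjb _ _ _ surj (v g))].
  have pu : gmap pi u = v.
    by apply/ffunP => g; rewrite !ffunE; apply/eqP; exact: (xchooseP (surjb _ _ _ surj (v g))).
  exists (gmul u (gone S gT), gmul u d); split; first by exists u.
  by rewrite /= !gmap_gmul gmap_gone pu.
pose t := @tau _ sigma _ pi surj.
have tD := @tauD' _ sigma _ pi surj ker sK.
have tM := @tauM' _ sigma _ pi surj ker sK.
have t1 := @tau1' _ sigma _ pi surj ker sK.
have t0 := @tau0' _ sigma _ pi surj ker sK.
have tK := @tauK' _ sigma _ pi surj ker sK.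
have tnt := @tau_nt' _ sigma _ pi surj ker sK gal.
have tq : forall y, t y = y ^+ q.
  by move=> y; apply: (@tau_frob F q t).
apply: iff_trans (@LCD_iff S gT sigma (rmorph0 _) (rmorph1 _) (rmorphD _) (rmorphM _) d) _.
apply: iff_trans (fun_inj_unit _ _ _) _.
apply: iff_sym; apply: iff_trans (herm_LCD_ext _ _ _ _ _ (fun y => esym (tq y))) _.
apply: iff_trans (@LCD_iff F gT t t0 t1 tD tM (gmap pi d)) _.
apply: iff_trans (fun_inj_unit _ _ _) _.
have -> : matN (@Mx _ _ t (gmap pi d)) = map_mx pi (matN (@Mx _ _ sigma d)).
  apply/matrixP => i j; rewrite !mxE /Mx rmorphD rmorph_nat rmorph_sum.
  congr (_ + _); apply: eq_bigr => g _; rewrite rmorphM !ffunE -tau_pi //.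
rewrite !unitmxE det_map_mx unitfE.
split=> u.
  by apply: contraLR u => /ker ->; rewrite eqxx.
by apply/eqP => /ker; rewrite u.
Qed.
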